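(* Let $p$ be an odd prime and $P$ a finite $p$-group of class $2$ and exponent $p$. If $\mathcal{H}$ and $\mathcal{K}$ are two fully refined central decompositions of $P$ such that $\{HZ(P) : H\in\mathcal{H}\}=\{KZ(P): K\in\mathcal{K}\}$, then $\mathcal{H}$ and $\mathcal{K}$ are exchangeable.
   Context: A central decomposition of a group $G$ is a set $\mathcal{H}$ of subgroups of $G$ such that distinct members commute elementwise, $G$ is generated by $\mathcal{H}$, and no proper subset of $\mathcal{H}$ generates $G$. A group is centrally indecomposable if its only central decomposition is $\{G\}$; a central decomposition is fully refined if all its members are centrally indecomposable. Two central decompositions $\mathcal{H}$ and $\mathcal{K}$ of $G$ are exchangeable if for each subset $\mathcal{J}\subseteq\mathcal{H}$ there is $\alpha\in\operatorname{Aut}G$ such that $\mathcal{J}\alpha\subseteq\mathcal{K}$ and $(\mathcal{H}-\mathcal{J})\alpha=\mathcal{H}-\mathcal{J}$, where $\mathcal{J}\alpha=\{J\alpha: J\in\mathcal{J}\}$. *)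

(* Defs.v *)
From mathcomp Require Import all_boot all_fingroup all_solvable.
Set Implicit Arguments. Unset Strict Implicit. Unset Printing Implicit Defensive.
Local Open Scope group_scope.

Section CentralDecomp.
Variable gT : finGroupType.

Definition gen_by (H : {set {group gT}}) : {set gT} :=
  << \bigcup_(X in H) gval X >>.

Definition central_decomp (G : {set gT}) (H : {set {group gT}}) : Prop :=
  [/\ (forall X Y : {group gT}, X \in H -> Y \in H -> X != Y ->
         gval X \subset 'C(gval Y)),
      gen_by H = G &
      (forall H' : {set {group gT}}, H' \proper H -> gen_by H' != G)].

Definition centrally_indecomposable (G : {group gT}) : Prop :=
  forall H : {set {group gT}}, central_decomp G H -> H = [set G].

Definition fully_refined (G : {set gT}) (H : {set {group gT}}) : Prop :=
  central_decomp G H /\ (forall X : {group gT}, X \in H -> centrally_indecomposable X).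

Definition gsets (H : {set {group gT}}) : {set {set gT}} :=
  [set gval X | X in H].

Definition img_fam (a : {perm gT}) (H : {set {group gT}}) : {set {set gT}} :=
  [set [set a x | x in gval X] | X in H].

Definition exchangeable (G : {set gT}) (H K : {set {group gT}}) : Prop :=
  forall J : {set {group gT}}, J \subset H ->
    exists2 a : {perm gT}, a \in Aut G &
      img_fam a J \subset gsets K /\ img_fam a (H :\: J) = gsets (H :\: J).

End CentralDecomp.

(* Main.v *)
Require Import Defs.
From mathcomp Require Import all_boot all_fingroup all_solvable.
Set Implicit Arguments. Unset Strict Implicit. Unset Printing Implicit Defensive.
Local Open Scope group_scope.
Section S.
Variable gT : finGroupType.
Implicit Types P X Y R W M : {group gT}.
Implicit Types S L : {set {group gT}}.

Lemma gen_byU S1 S2 : gen_by (S1 :|: S2) = gen_by S1 <*> gen_by S2.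
Proof.
rewrite /gen_by bigcup_setU /joing; apply/eqP; rewrite eqEsubset; apply/andP; split.
  by apply: genS; apply: setUSS; apply: sub_gen.
by rewrite gen_subG subUset; apply/andP; split; apply: genS; [apply: subsetUl | apply: subsetUr].
Qed.

Lemma gen_by1 X : gen_by [set X] = X.
Proof. by rewrite /gen_by big_set1 genGid. Qed.

Lemma gen_by_sub S X : X \in S -> gval X \subset gen_by S.
Proof.
move=> XS; rewrite /gen_by; apply/subsetP => x xX.
apply: mem_gen; apply/bigcupP; by exists X.
Qed.

Lemma gen_by_subG S (G : {group gT}) :
  (forall X, X \in S -> gval X \subset G) -> gen_by S \subset G.
Proof. by move=> sub; rewrite gen_subG; apply/bigcupsP. Qed.

Lemma gen_byS S1 S2 : S1 \subset S2 -> gen_by S1 \subset gen_by S2.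
Proof.
move=> sS; apply: gen_by_subG => X XS; apply: gen_by_sub; exact: (subsetP sS).
Qed.

Lemma gen_by_cents S1 S2 :
  (forall X Y, X \in S1 -> Y \in S2 -> gval X \subset 'C(Y)) ->
  gen_by S1 \subset 'C(gen_by S2).
Proof.
move=> cS; apply: gen_by_subG => X XS1; rewrite centsC.
apply: gen_by_subG => Y YS2; rewrite centsC; exact: cS.
Qed.

Lemma indec_nontriv X : centrally_indecomposable X -> gval X != 1.
Proof.
move=> ci; apply/eqP => X1.
have cd : central_decomp X set0.
  split; first by move=> ? ?; rewrite inE.
    by rewrite /gen_by big_set0 gen0 X1.
  by move=> H' /properP[_ [x]]; rewrite inE.
by move: (ci _ cd) => /setP/(_ X); rewrite !inE eqxx.
Qed.

Lemma indec_max X M z : centrally_indecomposable X -> z \in 'Z(X) ->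
  maximal M X -> z \notin M -> gval X = <[z]>.
Proof.
move=> ci zZ maxM zM; apply/eqP; apply/negPn/negP => neX.
have [zX cXz] : z \in X /\ z \in 'C(X) by move: zZ; rewrite inE => /andP.
have pMX := maxgroupp maxM; have sMX := proper_sub pMX.
have sCX : <[z]> \subset X by rewrite cycle_subG.
have pCX : <[z]> \proper X by rewrite properEneq eq_sym neX.
have cMC : M \subset 'C(<[z]>).
  by rewrite centsC cycle_subG; apply: subsetP (centS sMX) _ cXz.
have cd : central_decomp X [set M; <[z]>%G].
  split.
  - move=> A B /set2P[] -> /set2P[] -> //=; rewrite ?eqxx //.
    by move=> _; rewrite centsC.
  - rewrite /gen_by bigcup_setU !big_set1 -/(joing M <[z]>).
    apply/eqP; rewrite eqEsubset join_subG sMX sCX /=.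
    have sMJ : M \subset M <*> <[z]> by apply: joing_subl.
    have sJX : M <*> <[z]> \subset X by rewrite join_subG (proper_sub pMX).
    case: (maxgroupP maxM) => _ /(_ (M <*> <[z]>)%G) H.
    apply: contraT => nsub.
    have pJ : M <*> <[z]> \proper X by rewrite properEneq sJX andbT; apply: contraNneq nsub => ->.
    have := H pJ sMJ => E; case/negP: zM; rewrite -E; apply: mem_gen.
    by rewrite inE cycle_id orbT.
  - move=> H' /properP[sH' [A AS AH']].
    have: H' \subset [set M; <[z]>%G] :\ A by apply/subsetP => B BH; rewrite in_setD1 (subsetP sH' _ BH) andbT; by apply: contraNneq AH' => <-.
    move: AS => /set2P[] -> sub.
    + have : H' \subset [set <[z]>%G].
        apply: subset_trans sub _; apply/subsetP => B; rewrite !inE => /andP[/negPf -> ] //.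
      move/gen_byS; rewrite gen_by1 => sG; apply/eqP => E.
      by have := proper_subn pCX; rewrite -E sG.
    + have : H' \subset [set M].
        apply: subset_trans sub _; apply/subsetP => B; rewrite !inE => /andP[/negPf -> ] //.
        by rewrite orbF.
      move/gen_byS; rewrite gen_by1 => sG; apply/eqP => E.
      by have := proper_subn pMX; rewrite -E sG.
have := ci _ cd => /setP/(_ M); rewrite !inE eqxx /= => /esym/eqP EM.
by move: pMX; rewrite EM properxx.
Qed.
Lemma swap_aut P Y R X (f : {morphism Y >-> gT}) :
  Y \* R = P -> f @* Y = X -> X \subset 'C(R) -> {in Y :&: R, forall y, f y = y} ->
  X * R = P ->
  exists2 a : {perm gT}, a \in Aut P &
    (a @: X = Y /\ forall W : {set gT}, W \subset R -> a @: W = W).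
Proof.
move=> defP fY cXR eqf defXR.
have cf : idm R @* R \subset 'C(f @* Y).
  by rewrite morphim_idm // fY centsC.
have eqf' : {in Y :&: R, f =1 idm R} by move=> y Hy /=; rewrite eqf.
pose g := cprodm defP cf eqf'.
have img : g @* P = P by rewrite im_cprodm fY morphim_idm.
have injg : 'injm g.
  have := card_morphim g P; rewrite img setIid => E.
  have sK : 'ker g \subset P by apply: subsetIl.
  have := Lagrange sK; rewrite -E => /eqP; rewrite -{2}[#|P|]mul1n eqn_pmul2r //.
  by move=> /eqP H1; rewrite /= (card1_trivg H1).
exists (aut injg img)^-1; first by rewrite groupV Aut_aut.
have gW : forall W : {set gT}, W \subset R -> aut injg img @: W = W.
  move=> W sWR; rewrite imset_autE; last first.
    by apply: subset_trans sWR _; have [_ <- _] := cprodP defP; apply: mulG_subr.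
  by rewrite morphim_cprodmr // morphim_idm.
split.
  have sYP : Y \subset P by have [_ <- _] := cprodP defP; apply: mulG_subl.
  rewrite -fY -(morphim_cprodml defP cf eqf' (subxx Y)) -imset_autE // -imset_comp.
  by rewrite -[RHS]imset_id; apply: eq_imset => y /=; rewrite permK.
move=> W sWR; rewrite -{1}(gW W sWR) -imset_comp -[RHS]imset_id.
by apply: eq_imset => y /=; rewrite permK.
Qed.
End S.

Section PG.
Variable gT : finGroupType.
Implicit Types X Y R W M : {group gT}.
Implicit Types S L : {set {group gT}}.
Variables (p : nat) (P : {group gT}).
Hypotheses (prp : prime p) (pP : p.-group P) (cl2 : nil_class P = 2)
  (expP : exponent P = p).

Lemma derZ : P^`(1) \subset 'Z(P).
Proof. by rewrite -nil_class2 cl2. Qed.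

Lemma Mho1_sub X : X \subset P -> 'Mho^1(X) = 1.
Proof.
move=> sXP; rewrite (MhoE 1 (pgroupS sXP pP)); apply/trivgP; rewrite gen_subG.
apply/subsetP => y /imsetP[x xX ->]; rewrite expn1 -expP inE.
by rewrite expg_exponent // (subsetP sXP).
Qed.

Lemma Phi_sub_der X : X \subset P -> 'Phi(X) = X^`(1).
Proof.
by move=> sXP; rewrite (Phi_joing (pgroupS sXP pP)) Mho1_sub // joingG1.
Qed.

Lemma indec_cyc X z : X \subset P -> centrally_indecomposable X ->
  z \in 'Z(X) -> z \notin X^`(1) -> gval X = <[z]>.
Proof.
move=> sXP ci zZ zD.
have [M /andP[mM zM]] : exists M : {group gT}, maximal_eq M X && (z \notin M).
  apply/existsP; apply: contraR zD => /existsPn H.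
  rewrite -Phi_sub_der //; apply/bigcapP => M mM.
  by move: (H M); rewrite mM /= negbK.
have zX : z \in X by move: zZ; rewrite inE => /andP[].
move: mM; rewrite /maximal_eq => /orP[/eqP EM | maxM].
  by move: zM; rewrite EM zX.
exact: indec_max ci zZ maxM zM.
Qed.

Lemma indec_na X : X \subset P -> centrally_indecomposable X ->
  ~~ abelian X -> 'Z(X) \subset X^`(1).
Proof.
move=> sXP ci nab; apply/subsetP => z zZ; apply: contraR nab => zD.
by rewrite (indec_cyc sXP ci zZ zD) cycle_abelian.
Qed.

Lemma indec_ab X : X \subset P -> centrally_indecomposable X ->
  abelian X -> #|X| = p.
Proof.
move=> sXP ci ab.
have [z zX nz] := trivgPn _ (indec_nontriv ci).
have zZ : z \in 'Z(X) by rewrite (center_idP ab).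
have zD : z \notin X^`(1) by rewrite (derG1P ab) inE.
rewrite (indec_cyc sXP ci zZ zD) -orderE.
apply/(prime_nt_dvdP prp); first by rewrite order_eq1.
by rewrite -expP dvdn_exponent // (subsetP sXP).
Qed.

End PG.

Section KS.
Variable gT : finGroupType.
Implicit Types X Y R W M : {group gT}.
Implicit Types S L : {set {group gT}}.
Variables (p : nat) (P : {group gT}) (K : {set {group gT}}).
Hypotheses (prp : prime p) (pP : p.-group P) (cl2 : nil_class P = 2)
  (expP : exponent P = p).
Hypotheses (Kc : forall X Y, X \in K -> Y \in K -> X != Y -> gval X \subset 'C(Y))
  (Kg : gen_by K = P)
  (Kna : forall Y, Y \in K -> ~~ abelian Y -> 'Z(Y) \subset Y^`(1))
  (Kab : forall Y, Y \in K -> abelian Y -> #|Y| = p).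

Lemma ZPY Y : Y \subset P -> 'Z(P) :&: Y \subset 'Z(Y).
Proof.
move=> sYP; apply/subsetP => x; rewrite !inE => /andP[/andP[_ cx] xY].
by rewrite xY (subsetP (centS sYP)).
Qed.

Lemma cent_member L X : (forall X Y, X \in L -> Y \in L -> X != Y -> gval X \subset 'C(Y)) ->
  gen_by L = P -> X \in L -> abelian X -> gval X \subset 'Z(P).
Proof.
move=> cL gL XL ab; have sXP : gval X \subset P by rewrite -gL gen_by_sub.
rewrite /center subsetI sXP /= -gL centsC.
apply: (@gen_by_subG _ _ 'C(X)%G) => W WL; rewrite centsC.
by case: (eqVneq W X) => [-> | ne]; [exact: ab | apply: cL; rewrite // eq_sym].
Qed.

Lemma KZ_ind n S : S \subset K -> (forall Y, Y \in S -> ~~ abelian Y) -> #|S| = n ->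
  'Z(P) :&: gen_by S \subset P^`(1).
Proof.
elim: n S => [|n IH] S sSK naS cS.
  move/eqP: cS; rewrite cards_eq0 => /eqP ->.
  by rewrite /gen_by big_set0 gen0 setIg1 sub1G.
have [Y YS] : exists Y, Y \in S by apply/set0Pn; rewrite -card_gt0 cS.
have YK := subsetP sSK Y YS.
have sYP : gval Y \subset P by rewrite -Kg gen_by_sub.
set S0 := S :\ Y.
have cS0 : gen_by S0 \subset 'C(Y).
  apply: gen_by_subG => W; rewrite in_setD1 => /andP[neW WS].
  by apply: Kc; rewrite ?(subsetP sSK).
have defS : gen_by S = Y * gen_by S0.
  by rewrite -{1}(setD1K YS) gen_byU gen_by1 cent_joinEr.
apply/subsetP => z /setIP[zZ]; rewrite defS => /mulsgP[y m yY mS0 ez].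
have zP : z \in P := subsetP (subsetIl P 'C(P)) z zZ.
have zC : z \in 'C(P) := subsetP (subsetIr P 'C(P)) z zZ.
have ey : y = z * m^-1 by rewrite ez -mulgA mulgV mulg1.
have yZ : y \in 'Z(P).
  apply/setIP; split; first exact: (subsetP sYP).
  rewrite -cycle_subG centsC -Kg.
  apply: (@gen_by_subG _ _ 'C(<[y]>)%G) => W WK; rewrite centsC cycle_subG.
  case: (eqVneq W Y) => [-> | ne].
    rewrite ey groupM ?groupV //; first exact: (subsetP (centS sYP)).
    exact: (subsetP cS0).
  by apply: (subsetP (Kc YK WK _)); rewrite // eq_sym.
have yD : y \in P^`(1).
  apply: (subsetP (dergS 1 sYP)); apply: (subsetP (Kna YK (naS Y YS))).
  by apply: (subsetP (ZPY sYP)); apply/setIP.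
have mD : m \in P^`(1).
  apply: (subsetP (IH S0 _ _ _)).
  - by apply: subset_trans sSK; apply: subD1set.
  - by move=> W; rewrite in_setD1 => /andP[_ /naS].
  - by rewrite (cardsD1 Y S) YS in cS; case: cS.
  apply/setIP; split => //.
  have -> : m = y^-1 * z by rewrite ez mulKg.
  by rewrite groupM ?groupV.
by rewrite ez groupM.
Qed.


Lemma KZ (R : {group gT}) : P^`(1) \subset R ->
  (forall Y, Y \in K -> abelian Y -> gval Y \subset R) -> 'Z(P) \subset R.
Proof.
move=> sDR sabR.
set Kn := [set Y in K | ~~ abelian Y]; set Ka := [set Y in K | abelian Y].
have eK : K = Kn :|: Ka.
  by apply/setP => Y; rewrite !inE; case: (abelian Y); rewrite ?andbT ?andbF ?orbF.
have sKa : gen_by Ka \subset 'Z(P).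
  apply: (@gen_by_subG _ _ 'Z(P)%G) => Y; rewrite inE => /andP[YK ab].
  exact: cent_member Kc Kg YK ab.
have sKaR : gen_by Ka \subset R.
  by apply: gen_by_subG => Y; rewrite inE => /andP[YK ab]; apply: sabR.
have sKnP : gen_by Kn \subset P by rewrite -Kg gen_byS // eK subsetUl.
have defP : gen_by K = gen_by Kn * gen_by Ka.
  rewrite eK gen_byU cent_joinEr //.
  by apply: subset_trans sKa _; apply: subset_trans (subsetIr _ _) (centS sKnP).
apply/subsetP => z zZ.
have zP : z \in P := subsetP (subsetIl P 'C(P)) z zZ.
have : z \in gen_by Kn * gen_by Ka by rewrite -defP Kg.
case/mulsgP => n a nKn aKa ez.
have aZ := subsetP sKa a aKa.
have nD : n \in P^`(1).
  apply: (subsetP (@KZ_ind #|Kn| Kn _ _ _)).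
  - by apply/subsetP => Y; rewrite inE => /andP[].
  - by move=> Y; rewrite inE => /andP[].
  - by [].
  apply/setIP; split => //.
  have -> : n = z * a^-1 by rewrite ez -mulgA mulgV mulg1.
  by rewrite groupM ?groupV.
by rewrite ez groupM ?(subsetP sDR _ nD) ?(subsetP sKaR _ aKa).
Qed.

End KS.

Section Step.
Variable gT : finGroupType.
Implicit Types X Y R W M : {group gT}.
Implicit Types S L : {set {group gT}}.
Variables (p : nat) (P : {group gT}) (K : {set {group gT}}).
Hypotheses (prp : prime p) (pP : p.-group P) (cl2 : nil_class P = 2)
  (expP : exponent P = p).
Hypotheses (Kc : forall X Y, X \in K -> Y \in K -> X != Y -> gval X \subset 'C(Y))
  (Kg : gen_by K = P)
  (Kna : forall Y, Y \in K -> ~~ abelian Y -> 'Z(Y) \subset Y^`(1))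
  (Kab : forall Y, Y \in K -> abelian Y -> #|Y| = p).

Definition good L : Prop :=
  [/\ forall X Y, X \in L -> Y \in L -> X != Y -> gval X \subset 'C(Y),
      gen_by L = P,
      forall X, X \in L -> abelian X -> #|X| = p /\ gen_by (L :\ X) != P &
      forall X, X \in L -> ~~ abelian X ->
         'Z(X) \subset X^`(1) /\ exists2 Y, Y \in K & gval X * 'Z(P) = gval Y * 'Z(P)].

Lemma facts L X R : good L -> X \in L -> gval R = gen_by (L :\ X) ->
  [/\ gval X \subset P, gval R \subset P, gval R \subset 'C(X) & gval X * R = P].
Proof.
move=> [cL gL _ _] XL eR.
have sXP : gval X \subset P by rewrite -gL gen_by_sub.
have sRP : gval R \subset P by rewrite -gL eR gen_byS // subD1set.
have cRX : gval R \subset 'C(X).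
  rewrite eR; apply: (@gen_by_subG _ _ 'C(X)%G) => W; rewrite in_setD1 => /andP[ne WL].
  by apply: cL.
split => //; rewrite -gL -(setD1K XL) gen_byU gen_by1 -eR cent_joinEr //.
Qed.

Lemma KpY Y : Y \in K -> gval Y \subset P.
Proof. by move=> YK; rewrite -Kg gen_by_sub. Qed.

Lemma core_ab L X R : good L -> X \in L -> abelian X -> gval R = gen_by (L :\ X) ->
  exists Y, exists2 a, a \in Aut P &
   [/\ Y \in K, a @: X = Y, Y \* R = P & forall W : {set gT}, W \subset R -> a @: W = W].
Proof.
move=> gdL XL ab eR; have [sXP sRP cRX defXR] := facts gdL XL eR.
have [cL gL abL naL] := gdL.
have [oX nR] := abL X XL ab.
have XnR : ~~ (gval X \subset R).
  apply: contra nR => sXR; rewrite -eR; apply/eqP/eqP; rewrite eqEsubset sRP /=.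
  by rewrite -defXR mul_subG.
have sXZ : gval X \subset 'Z(P) := cent_member cL gL XL ab.
have defXRc : X \* R = P by rewrite cprodE // .
have sDR : P^`(1) \subset R.
  have := der_cprod 1 defXRc; rewrite (derG1P ab) => /cprodP[_ <- _].
  by rewrite mul1g der_sub.
have [Y /andP[YK /andP[abY YnR]]] : exists Y, (Y \in K) && (abelian Y && ~~ (gval Y \subset R)).
  apply/existsP; apply: contraR XnR => /existsPn H.
  apply: subset_trans sXZ _; apply: (KZ Kc Kg Kna sDR) => Y YK abY.
  by move: (H Y); rewrite YK abY /= negbK.
have oY := Kab YK abY.
have sYZ : gval Y \subset 'Z(P) := cent_member Kc Kg YK abY.
have tiYR : Y :&: R = 1 by apply: prime_TIg; rewrite // oY.
have tiXR : X :&: R = 1 by apply: prime_TIg; rewrite // oX.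
have cYR : gval R \subset 'C(Y).
  by rewrite centsC; apply: subset_trans sYZ _; apply: subset_trans (subsetIr _ _) (centS sRP).
have defYR : Y \* R = P.
  rewrite cprodE //; apply/eqP; rewrite eqEcard mul_subG ?(KpY YK) //=.
  by rewrite TI_cardMg // oY -oX -TI_cardMg // defXR.
have isoYX : Y \isog X.
  by rewrite isog_cyclic_card ?prime_cyclic ?oY ?oX ?eqxx.
have [f injf fY] := isogP isoYX.
have eqf : {in Y :&: R, forall y, f y = y}.
  by move=> y; rewrite tiYR inE => /eqP ->; rewrite morph1.
have cXR : gval X \subset 'C(R) by rewrite centsC.
have [a Aa [aX aW]] := swap_aut defYR fY cXR eqf defXR.
by exists Y, a.
Qed.


Lemma derMZ (A G : {group gT}) : gval A \subset P -> gval G = A * 'Z(P) ->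
  G^`(1) = A^`(1).
Proof.
move=> sAP eG.
have cZA : 'Z(P) \subset 'C(A) by apply: subset_trans (subsetIr _ _) (centS sAP).
have defG : A \* 'Z(P) = G by rewrite cprodE.
have := der_cprod 1 defG; rewrite (derG1P (center_abelian P)).
by case/cprodP => _ <- _; rewrite mulg1.
Qed.

Lemma core_na L X R : good L -> X \in L -> ~~ abelian X -> gval R = gen_by (L :\ X) ->
  exists Y, exists2 a, a \in Aut P &
   [/\ Y \in K, a @: X = Y, Y \* R = P & forall W : {set gT}, W \subset R -> a @: W = W].
Proof.
move=> gdL XL nab eR; have [sXP sRP cRX defXR] := facts gdL XL eR.
have [cL gL abL naL] := gdL.
have [ZX [Y YK eXY]] := naL X XL nab.
have sYP := KpY YK.
have cZ : forall A : {group gT}, gval A \subset P -> 'Z(P) \subset 'C(A).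
  by move=> A sAP; apply: subset_trans (subsetIr _ _) (centS sAP).
have eD : X^`(1) = Y^`(1).
  have e0 : gval (X <*> 'Z(P))%G = X * 'Z(P) by rewrite /= cent_joinEr ?cZ.
  have e1 : gval (X <*> 'Z(P))%G = Y * 'Z(P) by rewrite e0.
  by rewrite -(derMZ sXP e0) -(derMZ sYP e1).
have nabY : ~~ abelian Y.
  by apply: contra nab => abY; apply/derG1P; rewrite eD; apply/derG1P.
have sDX : X^`(1) \subset X := der_sub 1 X.
have sDY : X^`(1) \subset Y by rewrite eD der_sub.
have sDZ : X^`(1) \subset 'Z(P) by apply: subset_trans (dergS 1 sXP) (derZ cl2).
have abZ : p.-abelem 'Z(P).
  by rewrite abelemE // center_abelian -expP exponentS // center_sub.
have [W0 cW] := splitsP (abelem_splits abZ sDZ).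
case/complP: cW => tiDW defZ.
have sWZ : gval W0 \subset 'Z(P) by rewrite -defZ mulG_subr.
have tiXW : X :&: W0 = 1.
  apply/trivgP/subsetP => x /setIP[xX xW].
  have xZ : x \in 'Z(P) := subsetP sWZ x xW.
  have xD : x \in X^`(1) by apply: (subsetP ZX); apply: (subsetP (ZPY sXP)); apply/setIP.
  by rewrite -tiDW; apply/setIP.
have cWX : gval W0 \subset 'C(X) by apply: subset_trans sWZ (cZ X sXP).
have dXW : X \x W0 = (X <*> W0)%G by rewrite dprodEY.
have cf : trivm W0 @* W0 \subset 'C(idm X @* X) by rewrite morphim_trivm sub1G.
pose pi := dprodm dXW cf.
have eG2 : gval (X <*> W0)%G = X * W0 by rewrite /= cent_joinEr.
have sYG2 : gval Y \subset (X <*> W0)%G.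
  rewrite eG2 -[X in X * W0](mulGSid sDX) -mulgA defZ eXY; exact: mulG_subl.
pose f := restrm sYG2 pi.
have piX : forall A : {set gT}, A \subset X -> pi @* A = A.
  by move=> A sAX; rewrite morphim_dprodml // morphim_idm.
have piW : pi @* W0 = 1 by rewrite morphim_dprodmr // morphim_trivm.
have sDG2 : X^`(1) \subset (X <*> W0)%G by apply: subset_trans sDX (joing_subl _ _).
have sXG2 : gval X \subset (X <*> W0)%G by apply: joing_subl.
have piZ : pi @* 'Z(P) = X^`(1).
  by rewrite -defZ morphimMl // piX // piW mulg1.
have piXZ : pi @* (X * 'Z(P)) = X by rewrite morphimMl // piX // piZ mulGSid.
have piYZ : pi @* (Y * 'Z(P)) = pi @* Y * X^`(1) by rewrite morphimMl // piZ.
have sDpiY : X^`(1) \subset pi @* Y by rewrite -{1}(piX _ sDX) morphimS.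
have fY : f @* Y = X.
  rewrite morphim_restrm setIid; apply: etrans piXZ; by rewrite eXY piYZ mulGSid.
have cYR : gval Y \subset 'C(R).
  have sYG2' := sYG2; rewrite eG2 in sYG2'; apply: subset_trans sYG2' _; apply: mul_subG; first by rewrite centsC.
  by apply: subset_trans sWZ (cZ R sRP).
have eqf : {in Y :&: R, forall y, f y = y}.
  move=> y /setIP[yY yR].
  have yZ : y \in 'Z(P).
    apply/setIP; split; first exact: (subsetP sRP).
    rewrite -cycle_subG centsC -defXR; apply: mul_subG; rewrite centsC cycle_subG.
      exact: (subsetP cRX).
    exact: (subsetP cYR).
  have yD : y \in X^`(1).
    rewrite eD; apply: (subsetP (Kna YK nabY)); apply: (subsetP (ZPY sYP)).
    by apply/setIP.
  have yX : y \in X := subsetP sDX y yD.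
  by rewrite /f /restrm /pi dprodmEl.
have cXR : gval X \subset 'C(R) by rewrite centsC.
have defYR : Y \* R = P.
  rewrite cprodE; last by rewrite centsC.
  apply/eqP; rewrite eqEsubset mul_subG //=.
  rewrite -(cent_joinEr (G := Y)); last by rewrite centsC.
  rewrite -defXR; apply: mul_subG; last exact: joing_subr.
  apply/subsetP => x xX.
  have : x \in X * 'Z(P) by apply: (subsetP (mulG_subl _ _)).
  rewrite eXY => /mulsgP[y z yY zZ ->].
  rewrite groupM //; first by apply: (subsetP (joing_subl _ _)).
  have : z \in X * R by rewrite defXR; apply: (subsetP (center_sub P)).
  case/mulsgP => [x' r x'X rR ez].
  have x'Z : x' \in 'Z(X).
    apply/setIP; split => //.
    have -> : x' = z * r^-1 by rewrite ez -mulgA mulgV mulg1.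
    rewrite groupM ?groupV //; first exact: (subsetP (cZ X sXP)).
    exact: (subsetP cRX).
  rewrite ez groupM //.
    by apply: (subsetP (joing_subl _ _)); apply: (subsetP sDY); apply: (subsetP ZX).
  by apply: (subsetP (joing_subr _ _)).
have [a Aa [aX aW]] := swap_aut defYR fY cXR eqf defXR.
by exists Y, a.
Qed.


Lemma imset_autM a (A B : {set gT}) : a \in Aut P -> A \subset P -> B \subset P ->
  a @: (A * B) = a @: A * a @: B.
Proof.
move=> Aa sA sB.
have EA : forall C : {set gT}, C \subset P -> a @: C = autm Aa @* C by move=> C sC; rewrite morphimEsub.
by rewrite !EA ?mul_subG // morphimMl.
Qed.

Lemma step L X : good L -> X \in L -> exists Y, exists2 a, a \in Aut P &
  [/\ Y \in K, a @: X = Y, forall W, W \in L -> W != X -> a @: W = W,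
      Y \notin L :\ X & good (Y |: (L :\ X))].
Proof.
move=> gdL XL.
pose R := (<<\bigcup_(W in L :\ X) gval W>>)%G.
have eR : gval R = gen_by (L :\ X) by [].
have [Y [a Aa [YK aX defYR aW]]] : exists Y, exists2 a, a \in Aut P &
   [/\ Y \in K, a @: X = Y, Y \* R = P & forall W : {set gT}, W \subset R -> a @: W = W].
  by case: (boolP (abelian X)) => ab; [exact: (core_ab gdL XL ab eR) | exact: (core_na gdL XL ab eR)].
have [sXP sRP cRX defXR] := facts gdL XL eR.
have [cL gL abL naL] := gdL.
have [_ eYR cRY] := cprodP defYR.
have sWR : forall W, W \in L -> W != X -> gval W \subset R.
  by move=> W WL ne; rewrite eR gen_by_sub // in_setD1 ne.
have aW' : forall W, W \in L -> W != X -> a @: W = W by move=> W WL ne; apply: aW; apply: sWR.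
have XnR : ~~ (gval X \subset R).
  apply/negP => sXR; case: (boolP (abelian X)) => ab.
    have := (abL X XL ab).2; rewrite -eR; apply/negP; rewrite negbK.
    by apply/eqP; apply/eqP; rewrite eqEsubset sRP -defXR mul_subG.
  by move: ab; rewrite /abelian (subset_trans sXR cRX).
have YnL : Y \notin L :\ X.
  apply/negP => YL; have := YL; rewrite in_setD1 => /andP[neYX YL'].
  have := aW' Y YL' neYX; rewrite -{2}aX => /imset_inj E.
  have E' := E (@perm_inj _ a).
  by move: XnR; rewrite -E' (sWR Y YL' neYX).
have RneP : gval R != P by apply: contra XnR => /eqP ->.
exists Y; exists a => //; split => //.
split.
- move=> A B; rewrite !in_setU1 => /orP[/eqP-> | AL] /orP[/eqP-> | BL] neAB.
  + by rewrite eqxx in neAB.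
  + rewrite centsC; apply: subset_trans cRY.
    by move: BL; rewrite in_setD1 => /andP[ne BL]; apply: sWR.
  + apply: subset_trans cRY.
    by move: AL; rewrite in_setD1 => /andP[ne AL]; apply: sWR.
  + by move: AL BL; rewrite !in_setD1 => /andP[_ AL] /andP[_ BL]; apply: cL.
- by rewrite gen_byU gen_by1 -eR cent_joinEr.
- move=> X0; rewrite in_setU1 => /orP[/eqP-> | X0L] ab.
    by rewrite setU1K // -eR Kab.
  have neX0Y : X0 != Y by apply: contraNneq YnL => <-.
  have := X0L; rewrite in_setD1 => /andP[neX0X X0L'].
  have [oX0 nX0] := abL X0 X0L' ab; split => //.
  pose S := (L :\ X) :\ X0.
  have sSR : gen_by S \subset R by rewrite eR gen_byS // subD1set.
  have e1 : L :\ X0 = X |: S.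
    apply/setP => B; rewrite !inE; case: (eqVneq B X) => [-> | //].
    by rewrite XL andbT eq_sym.
  have e2 : (Y |: (L :\ X)) :\ X0 = Y |: S.
    apply/setP => B; rewrite !inE; case: (eqVneq B Y) => [-> | //].
    by rewrite eq_sym neX0Y.
  have g1 : gen_by (L :\ X0) = X * gen_by S.
    by rewrite e1 gen_byU gen_by1 cent_joinEr // (subset_trans sSR cRX).
  have g2 : gen_by ((Y |: (L :\ X)) :\ X0) = Y * gen_by S.
    by rewrite e2 gen_byU gen_by1 cent_joinEr // (subset_trans sSR cRY).
  have sSP : gen_by S \subset P by apply: subset_trans sSR sRP.
  have img : a @: (X * gen_by S) = Y * gen_by S.
    by rewrite imset_autM // aX aW.
  apply/negP => /eqP E2; move: nX0; rewrite g1; apply/negP; rewrite negbK.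
  have sXS : gval X * gen_by S \subset P by rewrite mul_subG.
  rewrite eqEcard sXS /= -E2 g2 -img card_imset //; exact: perm_inj.
- move=> X0; rewrite in_setU1 => /orP[/eqP-> | X0L] nab.
    by split; [apply: Kna | exists Y].
  by move: X0L; rewrite in_setD1 => /andP[_ X0L]; apply: naL.
Qed.


Lemma imset_permM (a1 a2 : {perm gT}) (A : {set gT}) :
  (a1 * a2) @: A = a2 @: (a1 @: A).
Proof. by rewrite -imset_comp; apply: eq_imset => x; rewrite permM. Qed.

Lemma main_ind n : forall L (J : {set {group gT}}), good L -> J \subset L -> #|J| = n ->
  exists2 a, a \in Aut P &
    (forall X, X \in J -> exists2 Y, Y \in K & a @: gval X = gval Y) /\
    (forall W, W \in L -> W \notin J -> a @: gval W = gval W).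
Proof.
elim: n => [|n IH] L J gdL sJL cJ.
  exists 1; first exact: group1.
  split.
    by move=> X XJ; move/eqP: cJ; rewrite cards_eq0 => /eqP E; rewrite E inE in XJ.
  move=> W _ _; rewrite -[RHS]imset_id; apply: eq_imset => x; by rewrite perm1.
have [X XJ] : exists X, X \in J by apply/set0Pn; rewrite -card_gt0 cJ.
have XL := subsetP sJL X XJ.
have [Y [a1 Aa1 [YK aX aW YnL gd']]] := step gdL XL.
have sJ' : J :\ X \subset Y |: (L :\ X).
  apply/subsetP => B; rewrite in_setD1 in_setU1 in_setD1 => /andP[ne BJ].
  by rewrite ne (subsetP sJL) ?orbT.
have cJ' : #|J :\ X| = n by move: cJ; rewrite (cardsD1 X J) XJ => -[].
have [a2 Aa2 [h1 h2]] := IH _ _ gd' sJ' cJ'.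
have YnJ : Y \notin J :\ X.
  apply: contra YnL; rewrite !in_setD1 => /andP[-> /(subsetP sJL) ->] //.
exists (a1 * a2); first by rewrite groupM.
split.
  move=> B BJ; case: (eqVneq B X) => [-> | ne].
    exists Y => //; rewrite imset_permM aX h2 // in_setU1 eqxx //.
  rewrite imset_permM aW ?(subsetP sJL) //; apply: h1.
  by rewrite in_setD1 ne.
move=> W WL WJ.
have ne : W != X by apply: contraNneq WJ => ->.
rewrite imset_permM aW //; apply: h2.
  by rewrite in_setU1 in_setD1 ne WL orbT.
by rewrite in_setD1 negb_and WJ orbT.
Qed.

End Step.

Unset Implicit Arguments.

Theorem theorem2p8 (gT : finGroupType) (p : nat) (P : {group gT})
    (H K : {set {group gT}}) :
  prime p -> odd p -> p.-group P -> nil_class P = 2 -> exponent P = p ->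
  fully_refined P H -> fully_refined P K ->
  [set gval X * 'Z(P) | X in H] = [set gval Y * 'Z(P) | Y in K] ->
  exchangeable P H K.
Proof.
move=> prp _ pP cl2 expP [[Hc Hg Hmin] Hind] [[Kc Kg Kmin] Kind] eHK.
have sHP : forall X, X \in H -> gval X \subset P by move=> X XH; rewrite -Hg gen_by_sub.
have sKP : forall X, X \in K -> gval X \subset P by move=> X XK; rewrite -Kg gen_by_sub.
have Kna : forall Y, Y \in K -> ~~ abelian Y -> 'Z(Y) \subset Y^`(1).
  by move=> Y YK nab; apply: (indec_na pP expP (sKP Y YK) (Kind Y YK) nab).
have Kab : forall Y, Y \in K -> abelian Y -> #|Y| = p.
  by move=> Y YK ab; apply: (indec_ab prp pP expP (sKP Y YK) (Kind Y YK) ab).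
have gdH : good p P K H.
  split => //.
    move=> X XH ab; split; first exact: (indec_ab prp pP expP (sHP X XH) (Hind X XH) ab).
    by apply: Hmin; apply: properD1.
  move=> X XH nab; split; first exact: (indec_na pP expP (sHP X XH) (Hind X XH) nab).
  have : gval X * 'Z(P) \in [set gval Y * 'Z(P) | Y in K].
    by rewrite -eHK; apply/imsetP; exists X.
  by case/imsetP => Y YK e; exists Y.
move=> J sJH.
have [a Aa [h1 h2]] := main_ind prp cl2 expP Kc Kg Kna Kab gdH sJH (erefl #|J|).
exists a => //; split.
  apply/subsetP => A /imsetP[X XJ ->].
  have [Y YK e] := h1 X XJ.
  by apply/imsetP; exists Y.
apply: eq_in_imset => X; rewrite inE => /andP[XnJ XH].
exact: h2.
Qed.
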